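(* Let $G=(V,E)$ be a nice graph and $J$ a good subset of $V$. Then there exists a $J$-covering family $\mathcal{C}$ such that $K_{\mathcal{C}}(e)\le5$ for all $e\in E\setminus E_{J,1}$ and $K_{\mathcal{C}}(e)=0$ for all $e\in E_{J,1}$.
   Context: All graphs are finite and simple. An edge is isolated if both its ends have degree $1$; a graph is nice if it has no isolated edges. For $J\subseteq V$: $E_{J,1}$ is the set of non-isolated edges of $G-J$; $E_{J,2}$ the isolated edges of $G-J$; $E_{J,3}$ the edges with exactly one end in $J$; $E_{J,4}$ the edges with both ends in $J$; $G_{J,3}=(V,E_{J,3})$, $G_{J,4}=(J,E_{J,4})$; $d_{G_{J,3}}(j)$ is the number of edges of $E_{J,3}$ at $j$. For $i\in V\setminus J$, if $N_{G_{J,3}}(i)=\{j\}$ then $i$ is a private neighbour of $j$. A set $J\subseteq V$ is a good subset if $J\ne\emptyset$ and: (J1) $G_{J,4}$ has maximum degree at most $1$; (J2) $G_{J,3}$ has no isolated edges; (J3) each $j\in J$ has at most one private neighbour; (J4) for each $e=\{j,j'\}\in E_{J,4}$ there is $i_e\in V\setminus J$ with $\{j,j'\}\subseteq N_{G_{J,3}}(i_e)$, neither $j$ nor $j'$ has a private neighbour, and $i_e\ne i_{e'}$ for distinct $e,e'\in E_{J,4}$; (J5) for every $e\in E_{J,2}$, each end vertex of $e$ has a neighbour in $J$. A subgraph family is a multiset of subgraphs of $G$. An $E_{J,2}$-covering family is a family $\{C_e:e\in E_{J,2}\}$ where each $C_e$ is an edge of $E_{J,3}$ sharing an end vertex with $e$.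 An $E_{J,3}$-covering family is a family $\mathcal{C}_{J,3}$ of paths in $G$, each with two distinct end vertices both in $J$, such that (i) for each pair of distinct $j,j'\in J$ the number of even-length paths in the family joining $j,j'$ is even and the number of odd-length ones is even; (ii) for each $j\in J$, $d_{\mathcal{C}_{J,3}}(j)\ge2d_{G_{J,3}}(j)$, where $d_{\mathcal{C}_{J,3}}(j)$ is the number of paths (with multiplicity) with end vertex $j$. An $E_{J,4}$-covering family is a family $\{C_e:e\in E_{J,4}\}$ where each $C_e$ is an odd-length closed walk containing $e$. A $J$-covering family is a union $\mathcal{C}=\mathcal{C}_{J,2}\cup\mathcal{C}_{J,3}\cup\mathcal{C}_{J,4}$ of an $E_{J,2}$-, $E_{J,3}$- and $E_{J,4}$-covering family. For a subgraph $H$, $K_H:E\to\{0,1\}$ is the indicator of $E(H)$; $K_{\mathcal{H}}=\sum_{H\in\mathcal{H}}K_H$ with multiplicity. *)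

(* Defs.v *)
(* A finite simple graph: vertex type V (a finType, the whole
   vertex set), adjacency adj : rel V, symmetric and irreflexive.
   Edges are 2-element vertex sets {u,v}. *)
From mathcomp Require Import all_boot.
Set Implicit Arguments. Unset Strict Implicit. Unset Printing Implicit Defensive.

Section Graph.
Variable V : finType.
Variable adj : rel V.

Definition edges : {set {set V}} :=
  [set f : {set V} | [exists u, exists v, adj u v && (f == [set u; v])]].

Definition degF (F : {set {set V}}) (x : V) : nat := #|[set f in F | x \in f]|.

Definition isolated (F : {set {set V}}) (f : {set V}) : bool :=
  (f \in F) && [forall x in f, degF F x == 1].

Definition nice : Prop := forall f, ~~ isolated edges f.

Variable J : {set V}.

Definition EGJ : {set {set V}} := [set f in edges | [disjoint f & J]].
Definition E1 : {set {set V}} := [set f in EGJ | ~~ isolated EGJ f].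
Definition E2 : {set {set V}} := [set f in EGJ | isolated EGJ f].
Definition E3 : {set {set V}} := [set f in edges | #|f :&: J| == 1].
Definition E4 : {set {set V}} := [set f in edges | f \subset J].

Definition N3 (i : V) : {set V} := [set j | [set i; j] \in E3].

Definition private_nb (j i : V) : bool := (i \notin J) && (N3 i == [set j]).

Definition good : Prop :=
  J != set0 /\
  [/\ forall j, j \in J -> degF E4 j <= 1,
      forall f, ~~ isolated E3 f,
      forall j, j \in J -> #|[set i | private_nb j i]| <= 1,
      exists ie : {set V} -> V,
                 (forall e, e \in E4 ->
                    [/\ ie e \notin J, e \subset N3 (ie e) &
                        forall j, j \in e -> forall i, ~~ private_nb j i])
                 /\ {in E4 &, injective ie}
    & forall e, e \in E2 -> forall v, v \in e ->
                 exists2 j, j \in J & adj v j].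

Definition walk_edges (p : seq V) : {set {set V}} :=
  [set f : {set V} | has (fun uv : V * V => f == [set uv.1; uv.2]) (zip p (behead p))].

(* closed walk p = [x0; ...; x_{k-1}] traversing x0 x1 ... x_{k-1} x0, k edges *)
Definition closed_walk_edges (p : seq V) : {set {set V}} :=
  if p is x :: s then walk_edges (x :: rcons s x) else set0.

Definition is_path (p : seq V) : bool :=
  if p is x :: s then path adj x s && uniq p else false.

Definition plen (p : seq V) : nat := (size p).-1.

Definition joins (p : seq V) (j j' : V) : bool :=
  if p is x :: s then ((x == j) && (last x s == j')) || ((x == j') && (last x s == j))
  else false.

Definition has_end (p : seq V) (j : V) : bool :=
  if p is x :: s then (x == j) || (last x s == j) else false.

Definition ends_in_J (p : seq V) : bool :=
  if p is x :: s then [&& x != last x s, x \in J & last x s \in J] else false.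

Definition dC (C3 : seq (seq V)) (j : V) : nat := count (fun p => has_end p j) C3.

Definition E2_covering (C2 : {set V} -> {set V}) : Prop :=
  forall e, e \in E2 -> C2 e \in E3 /\ (C2 e :&: e != set0).

Definition E3_covering (C3 : seq (seq V)) : Prop :=
  [/\ forall p, p \in C3 -> is_path p && ends_in_J p,
      forall j j', j \in J -> j' \in J -> j != j' ->
        ~~ odd (count (fun p => joins p j j' && ~~ odd (plen p)) C3) /\
        ~~ odd (count (fun p => joins p j j' && odd (plen p)) C3)
    & forall j, j \in J -> 2 * degF E3 j <= dC C3 j].

Definition E4_covering (C4 : {set V} -> seq V) : Prop :=
  forall e, e \in E4 ->
    [/\ C4 e != [::], cycle adj (C4 e), odd (size (C4 e)) & e \in closed_walk_edges (C4 e)].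

Definition J_covering C2 C3 C4 : Prop :=
  [/\ E2_covering C2, E3_covering C3 & E4_covering C4].

Definition KC (C2 : {set V} -> {set V}) (C3 : seq (seq V)) (C4 : {set V} -> seq V)
  (f : {set V}) : nat :=
  #|[set e in E2 | C2 e == f]| + count (fun p => f \in walk_edges p) C3
  + #|[set e in E4 | f \in closed_walk_edges (C4 e)]|.

End Graph.

(* Main.v *)
Require Import Defs.
From mathcomp Require Import all_boot.
From mathcomp Require Import zify.
Set Implicit Arguments. Unset Strict Implicit. Unset Printing Implicit Defensive.

Section H.
Variables (V : finType) (adj : rel V).
Hypotheses (adj_sym : symmetric adj) (adj_irr : irreflexive adj).

Lemma set2_eq (x y z : V) : ([set x; y] == [set x; z]) = (y == z).
Proof.
apply/eqP/eqP => [/setP H|->//].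
have := H y; rewrite !inE eqxx orbT => /esym/orP[/eqP yx|/eqP //]; subst y.
have := H z; rewrite !inE eqxx orbT orbb => /eqP //.
Qed.

Lemma set2_inj (x y z : V) : [set x; y] = [set x; z] -> y = z.
Proof. by move/eqP; rewrite set2_eq => /eqP. Qed.

Lemma edgesP (x y : V) : ([set x; y] \in edges adj) = adj x y.
Proof.
rewrite /edges inE; apply/existsP/idP => [[u /existsP[v /andP[Huv /eqP E]]]|Hxy].
  have xu : x \in [set u; v] by rewrite -E !inE eqxx.
  rewrite !inE in xu; case/orP: xu => /eqP xu; subst x.
    by rewrite (set2_inj E).
  by rewrite [RHS]setUC in E; rewrite (set2_inj E) adj_sym.
by exists x; apply/existsP; exists y; rewrite Hxy eqxx.
Qed.

Lemma edge_cases f : f \in edges adj -> exists x y, adj x y /\ f = [set x; y].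
Proof.
rewrite /edges inE => /existsP[u /existsP[v /andP[Huv /eqP E]]].
by exists u, v.
Qed.

Lemma adj_neq x y : adj x y -> x != y.
Proof. by apply: contraTneq => ->; rewrite adj_irr. Qed.

Lemma set2_neq0 (x y : V) : [set x; y] != set0.
Proof. by apply/set0Pn; exists x; rewrite !inE eqxx. Qed.

Lemma edge_neq0 f : f \in edges adj -> f != set0.
Proof. by case/edge_cases=> x [y [_ ->]]; apply: set2_neq0. Qed.

Variable J : {set V}.

Lemma cardI2 (u v : V) : u != v -> #|[set u; v] :&: J| = (u \in J) + (v \in J).
Proof.
move=> uv; rewrite setIUl cardsU.
have E: forall w : V, [set w] :&: J = if w \in J then [set w] else set0.
  move=> w; apply/setP=> z; rewrite !inE; case: (z =P w) => [->|] /=; case Hw: (w \in J) => //=; rewrite ?inE ?eqxx //.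
  by move/eqP/negbTE.
rewrite !E; have ne : [set u] :&: [set v] = set0.
  by apply/setP=> z; rewrite !inE; apply/negP=> /andP[/eqP -> /eqP e]; rewrite e eqxx in uv.
case: (u \in J); case: (v \in J); rewrite ?cards1 ?cards0 ?ne ?set0I ?setI0 ?cards0 //.
Qed.

Lemma E3P f : reflect (exists x y, [/\ x \notin J, y \in J, adj x y & f = [set x; y]]) (f \in E3 adj J).
Proof.
rewrite /E3 inE; apply: (iffP andP) => [[/edge_cases[u [v [Huv ->]]] /eqP]|[x [y [Hx Hy Hxy ->]]]].
  rewrite cardI2 ?adj_neq //.
  case Hu: (u \in J); case Hv: (v \in J) => //= _.
    by exists v, u; rewrite Hu Hv adj_sym setUC.
  by exists u, v; rewrite Hu Hv.
by rewrite edgesP Hxy cardI2 ?adj_neq // (negbTE Hx) Hy.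
Qed.

Lemma N3P i j : i \notin J -> (j \in N3 adj J i) = adj i j && (j \in J).
Proof.
move=> Hi; rewrite /N3 inE /E3 inE edgesP.
case A: (adj i j) => //=; by rewrite cardI2 ?adj_neq // (negbTE Hi); case: (j \in J).
Qed.

Lemma N3sym i j : (i \in N3 adj J j) = (j \in N3 adj J i).
Proof. by rewrite /N3 !inE setUC. Qed.

Lemma N3_J i j : i \in J -> j \in J -> j \notin N3 adj J i.
Proof.
move=> Hi Hj; rewrite /N3 inE /E3 inE; apply/negP=> /andP[].
by rewrite edgesP => /adj_neq ij; rewrite cardI2 // Hi Hj.
Qed.

Lemma degF_E3 x : degF (E3 adj J) x = #|N3 adj J x|.
Proof.
rewrite /degF (_ : [set f in E3 adj J | x \in f] = (fun y => [set x; y]) @: N3 adj J x).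
  by rewrite card_imset // => y z; apply: set2_inj.
apply/setP => f; apply/idP/imsetP.
  rewrite inE => /andP[fE xf]; move/E3P: (fE) => [u [v [_ _ _ fuv]]].
  rewrite fuv !inE in xf; case/orP: xf => /eqP xu; subst x.
    by exists v => //; rewrite /N3 inE -fuv.
  by exists u; [rewrite /N3 inE setUC -fuv | rewrite fuv setUC].
by move=> [y]; rewrite /N3 inE => yE ->; rewrite inE yE !inE eqxx.
Qed.


Lemma zip_rcons_neq (T : eqType) (t : seq T) : forall u0 x, uniq (u0 :: t) -> x \notin t ->
  (t = [::] -> u0 != x) -> all (fun ab : T * T => ab.1 != ab.2) (zip (u0 :: t) (rcons t x)).
Proof.
elim: t => [|t0 t IH] u0 x /= Hu Hx H0; first by rewrite H0.
move: Hu Hx; rewrite !inE !negb_or => /andP[/andP[u0t0 _] Hu'] /andP[xt0 xt].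
rewrite u0t0 /=; apply: IH => // t0nil; by rewrite eq_sym.
Qed.

Lemma zip_rot_neq (T : eqType) (s : seq T) ab : uniq s -> 1 < size s ->
  ab \in zip s (rot 1 s) -> ab.1 != ab.2.
Proof.
case: s => [|x t] //= Hu Hs; rewrite rot1_cons => Hab.
move: (Hu) => /andP[xt _].
by have /allP/(_ _ Hab) := zip_rcons_neq Hu xt (fun e => ltac:(by rewrite e in Hs)).
Qed.

Lemma zip_mem1 (T : eqType) (s t : seq T) ab : size s <= size t -> ab \in zip s t -> ab.1 \in s.
Proof. by move=> st H; rewrite -(unzip1_zip st); apply: map_f. Qed.
Lemma zip_mem2 (T : eqType) (s t : seq T) ab : size t <= size s -> ab \in zip s t -> ab.2 \in t.
Proof. by move=> st H; rewrite -(unzip2_zip st); apply: map_f. Qed.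

Variable ie : {set V} -> V.

Definition need i := [exists j in N3 adj J i, exists p, private_nb adj J j p].
Definition Lp i := [seq [:: ab.1; i; ab.2] | ab <- zip (enum (N3 adj J i)) (rot 1 (enum (N3 adj J i)))].
Definition base i := if (i \in J) || (#|N3 adj J i| < 2) then [::]
  else if (#|N3 adj J i| == 2) && ~~ need i then take 1 (Lp i) else Lp i.
Definition BB := flatten [seq base i | i <- enum V].

Lemma Lp_mem i p : 1 < #|N3 adj J i| -> p \in Lp i ->
  exists a b, [/\ a \in N3 adj J i, b \in N3 adj J i, a != b & p = [:: a; i; b]].
Proof.
move=> H /mapP[ab Hab ->]; exists ab.1, ab.2; split => //.
- by rewrite -mem_enum; apply: zip_mem1 Hab; rewrite size_rot.
- by rewrite -mem_enum -(mem_rot 1); apply: zip_mem2 Hab; rewrite size_rot.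
- by apply: zip_rot_neq Hab; rewrite ?enum_uniq // -cardE.
Qed.

Lemma base_mem i p : p \in base i ->
  exists a b, [/\ i \notin J, a \in N3 adj J i, b \in N3 adj J i, a != b & p = [:: a; i; b]].
Proof.
rewrite /base; case: ifP => // /norP[HJ]; rewrite -leqNgt => H2.
have H : p \in Lp i -> _ := fun Hp => Lp_mem H2 Hp.
case: ifP => _ Hp; last by case: (H Hp) => a [b [? ? ? ?]]; exists a, b.
by case: (H (mem_take Hp)) => a [b [? ? ? ?]]; exists a, b.
Qed.

Lemma BB_mem p : p \in BB ->
  exists i a b, [/\ i \notin J, a \in N3 adj J i, b \in N3 adj J i, a != b & p = [:: a; i; b]].
Proof.
by case/flattenP => q /mapP[i _ ->] /base_mem[a [b H]]; exists i, a, b.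
Qed.

Lemma count_BB (P : pred (seq V)) : count P BB = \sum_i count P (base i).
Proof. by rewrite /BB count_flatten -map_comp sumnE big_map big_enum. Qed.

Lemma cntL i j : 1 < #|N3 adj J i| ->
  count (fun p => has_end p j) (Lp i) = 2 * (j \in N3 adj J i).
Proof.
move=> H; rewrite /Lp count_map.
set s := enum (N3 adj J i).
have us : uniq s by apply: enum_uniq.
rewrite (eq_count (a2 := predU (fun ab : V * V => ab.1 == j) (fun ab => ab.2 == j))) //.
have := count_predUI (fun ab : V * V => ab.1 == j) (fun ab => ab.2 == j) (zip s (rot 1 s)).
rewrite (eq_in_count (a1 := predI _ _) (a2 := pred0)); last first.
  move=> ab Hab /=; apply/negP => /andP[/eqP e1 /eqP e2].
  have := zip_rot_neq us (ltac:(by rewrite -cardE)) Hab; by rewrite e1 e2 eqxx.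
rewrite count_pred0 addn0 => ->.
have e1 : count (fun ab : V * V => ab.1 == j) (zip s (rot 1 s)) = count_mem j s.
  by rewrite -[in RHS](unzip1_zip (s := s) (t := rot 1 s)) ?size_rot // /unzip1 count_map.
have e2 : count (fun ab : V * V => ab.2 == j) (zip s (rot 1 s)) = count_mem j (rot 1 s).
  by rewrite -[in RHS](unzip2_zip (s := s) (t := rot 1 s)) ?size_rot // /unzip2 count_map.
rewrite e1 e2 !count_uniq_mem ?rot_uniq // mem_rot mem_enum.
by case: (j \in N3 adj J i).
Qed.

Definition cnt i j := count (fun p => has_end p j) (base i).

Lemma take1_le (s : seq (seq V)) (P : pred (seq V)) : count P (take 1 s) <= 1.
Proof. apply: leq_trans (count_size _ _) _; rewrite size_take; case: ifP => //; by case: s => [|? []]. Qed.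

Lemma c_le2 i j : cnt i j <= 2.
Proof.
rewrite /cnt /base; case: ifP => // /norP[_]; rewrite -leqNgt => H.
case: ifP => _; first by apply: leq_trans (take1_le _ _) _.
by rewrite cntL //; case: (j \in _).
Qed.

Lemma c_le1 i j : #|N3 adj J i| == 2 -> ~~ need i -> cnt i j <= 1.
Proof.
move=> /eqP H2 Hn; rewrite /cnt /base H2 Hn /=; case: ifP => // _; exact: take1_le.
Qed.

Lemma c_ge1 i j : i \notin J -> j \in N3 adj J i -> 1 < #|N3 adj J i| -> 1 <= cnt i j.
Proof.
move=> Hi Hj H; have H' : (#|N3 adj J i| < 2) = false by rewrite ltnNge H.
rewrite /cnt /base (negbTE Hi) H' /=.
case: ifP => [/andP[H2 _]|_]; last by rewrite cntL // Hj.
move: Hj H2; rewrite -mem_enum cardE /Lp; case: (enum _) => [|a [|b [|c t]]] //= Hj _.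
by rewrite !inE in Hj; rewrite addn0; case/orP: Hj => /eqP ->; rewrite eqxx ?orbT.
Qed.

Lemma c_ge2 i j : i \notin J -> j \in N3 adj J i -> 1 < #|N3 adj J i| ->
  (2 < #|N3 adj J i|) || need i -> 2 <= cnt i j.
Proof.
move=> Hi Hj H1 H.
have H' : (#|N3 adj J i| < 2) = false by rewrite ltnNge H1.
rewrite /cnt /base (negbTE Hi) H' /=.
rewrite ifF ?cntL ?Hj //.
by case/orP: H => [H|->]; rewrite ?andbF // gtn_eqF.
Qed.

Lemma we3 (f : {set V}) (a i b : V) : (f \in walk_edges [:: a; i; b]) = (f == [set a; i]) || (f == [set i; b]).
Proof. by rewrite /walk_edges inE /= orbF. Qed.

Lemma BB_we_E3 f p : p \in BB -> f \in walk_edges p -> f \in E3 adj J.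
Proof.
case/BB_mem => i [a [b [Hi Ha Hb _ ->]]]; rewrite we3 => /orP[] /eqP ->.
  by move: Ha; rewrite /N3 inE setUC.
by move: Hb; rewrite /N3 inE.
Qed.

Lemma cnt_walk x y : x \notin J -> y \in J ->
  count (fun p => [set x; y] \in walk_edges p) BB = cnt x y.
Proof.
move=> Hx Hy; rewrite count_BB (bigD1 x) //= big1 ?addn0.
  apply: eq_in_count => p /base_mem [a [b [_ _ _ _ ->]]].
  by rewrite we3 /= (setUC [set a] [set x]) !set2_eq (eq_sym y) (eq_sym y).
move=> i ix; rewrite (eq_in_count (a2 := pred0)) ?count_pred0 //.
move=> p /base_mem [a [b [Hi _ _ _ ->]]] /=; rewrite we3.
apply/negP; case/orP => /eqP E.
  have : i \in [set x; y] by rewrite E !inE eqxx ?orbT.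
  by rewrite !inE (negbTE ix) /= => /eqP ei; rewrite ei Hy in Hi.
have : i \in [set x; y] by rewrite E !inE eqxx ?orbT.
by rewrite !inE (negbTE ix) /= => /eqP ei; rewrite ei Hy in Hi.
Qed.

Hypothesis ie_out : forall e, e \in E4 adj J -> ie e \notin J.
Hypothesis ie_sub : forall e, e \in E4 adj J -> e \subset N3 adj J (ie e).
Hypothesis ie_nopriv : forall e, e \in E4 adj J -> forall j, j \in e -> forall i, ~~ private_nb adj J j i.
Hypothesis ie_inj : {in E4 adj J &, injective ie}.
Hypothesis J5 : forall e, e \in E2 adj J -> forall v, v \in e -> exists2 j, j \in J & adj v j.
Hypothesis J2 : forall f, ~~ isolated (E3 adj J) f.
Hypothesis J3 : forall j, j \in J -> #|[set i | private_nb adj J j i]| <= 1.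

Definition bad (g : {set V}) := [exists e4 in E4 adj J,
  [&& ie e4 \in g, g :&: e4 != set0 & 2 < #|N3 adj J (ie e4)|]].
Definition C2 (e : {set V}) := odflt set0 [pick g in E3 adj J | (g :&: e != set0) && ~~ bad g].
Definition C4 (e : {set V}) : seq V :=
  if [pick uv : V * V | adj uv.1 uv.2 && (e == [set uv.1; uv.2])] is Some uv
  then [:: uv.1; uv.2; ie e] else [::].

Lemma in_set2_notJ z x y : z \notin J -> y \in J -> z \in [set x; y] -> z = x.
Proof. by move=> Hz Hy; rewrite !inE => /orP[/eqP //|/eqP e]; rewrite e Hy in Hz. Qed.

Lemma E4_sub e : e \in E4 adj J -> e \subset J.
Proof. by rewrite /E4 inE => /andP[]. Qed.
Lemma E4_edge e : e \in E4 adj J -> e \in edges adj.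
Proof. by rewrite /E4 inE => /andP[]. Qed.
Lemma E3_edge e : e \in E3 adj J -> e \in edges adj.
Proof. by rewrite /E3 inE => /andP[]. Qed.

Lemma card_edge e : e \in edges adj -> #|e| <= 2.
Proof. by case/edge_cases => x [y [_ ->]]; rewrite cards2; case: (x != y). Qed.

Lemma C2_spec e g : C2 e = g -> g != set0 -> [/\ g \in E3 adj J, g :&: e != set0 & ~~ bad g].
Proof.
rewrite /C2; case: pickP => [g' /andP[H1 /andP[H2 H3]]|_] /= <- //; by rewrite eqxx.
Qed.

Lemma C2_cover e : e \in E2 adj J -> C2 e \in E3 adj J /\ C2 e :&: e != set0.
Proof.
move=> He; rewrite /C2; case: pickP => [g /andP[H1 /andP[H2 _]]|H] //=; exfalso.
move: (He); rewrite /E2 inE /EGJ inE => /andP[/andP[eE dis] _].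
case/edge_cases: (eE) => u [w [_ ew]].
have ue : u \in e by rewrite ew !inE eqxx.
have uJ : u \notin J by rewrite (disjointFr dis ue).
case: (J5 He ue) => j jJ uj.
have g0E : [set u; j] \in E3 adj J by apply/E3P; exists u, j.
have g0e : [set u; j] :&: e != set0 by apply/set0Pn; exists u; rewrite !inE eqxx ue.
have := H [set u; j]; rewrite g0E g0e /= => /negbFE /existsP[e4 /and4P[e4E ie4 _ c4]].
have ieu : ie e4 = u := in_set2_notJ (ie_out e4E) jJ ie4.
rewrite ieu in c4.
have : ~~ (N3 adj J u \subset e4).
  apply/negP => /subset_leq_card Hc.
  by have := leq_trans Hc (card_edge (E4_edge e4E)); rewrite leqNgt c4.
case/subsetPn => j' j'N j'e4.
move: (j'N); rewrite N3P // => /andP[uj' j'J].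
have g1E : [set u; j'] \in E3 adj J by apply/E3P; exists u, j'.
have g1e : [set u; j'] :&: e != set0 by apply/set0Pn; exists u; rewrite !inE eqxx ue.
have := H [set u; j']; rewrite g1E g1e /= => /negbFE /existsP[e5 /and4P[e5E ie5 ne _]].
have ie5u : ie e5 = u := in_set2_notJ (ie_out e5E) j'J ie5.
have e54 : e5 = e4 by apply: ie_inj => //; rewrite ie5u ieu.
subst e5; case/set0Pn: ne => z; rewrite inE => /andP[].
rewrite !inE => /orP[] /eqP -> ze4.
  by have := subsetP (E4_sub e4E) _ ze4; rewrite (negbTE uJ).
by rewrite ze4 in j'e4.
Qed.

Lemma C4_spec e : e \in E4 adj J ->
  exists u v, [/\ adj u v, e = [set u; v] & C4 e = [:: u; v; ie e]].
Proof.
move=> He; rewrite /C4; case: pickP => [[u v] /andP[Huv /eqP E]|H]; first by exists u, v.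
case/edge_cases: (E4_edge He) => x [y [Hxy E]].
by have := H (x, y); rewrite /= Hxy E eqxx.
Qed.

Lemma cwe3 (f : {set V}) (u v w : V) : (f \in closed_walk_edges [:: u; v; w]) =
  [|| f == [set u; v], f == [set v; w] | f == [set w; u]].
Proof. by rewrite /closed_walk_edges /walk_edges inE /= orbF. Qed.

Lemma C4_cover e : e \in E4 adj J ->
  [/\ C4 e != [::], cycle adj (C4 e), odd (size (C4 e)) & e \in closed_walk_edges (C4 e)].
Proof.
move=> He; case: (C4_spec He) => u [v [Huv E ->]]; split => //.
  have /subsetP Hs := ie_sub He.
  have Hu := Hs u (ltac:(by rewrite E !inE eqxx)).
  have Hv := Hs v (ltac:(by rewrite E !inE eqxx ?orbT)).
  rewrite !N3P ?ie_out // in Hu Hv.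
  case/andP: Hu => Hu _; case/andP: Hv => Hv _.
  by rewrite /= Huv adj_sym Hv Hu.
by rewrite cwe3 E eqxx.
Qed.

Definition C3 := BB ++ BB.
Definition K2 f := #|[set e in E2 adj J | C2 e == f]|.
Definition K3 f := count (fun p => f \in walk_edges p) C3.
Definition K4 f := #|[set e in E4 adj J | f \in closed_walk_edges (C4 e)]|.

Lemma K2_notE3 f : f != set0 -> f \notin E3 adj J -> K2 f = 0.
Proof.
move=> f0 fE; apply/eqP; rewrite cards_eq0; apply/eqP/setP => e; rewrite [e \in _]inE [e \in set0]inE.
apply/negP => /andP[_ /eqP E]; have [H _ _] := C2_spec E f0; by rewrite H in fE.
Qed.

Lemma K2_bad f : f != set0 -> bad f -> K2 f = 0.
Proof.
move=> f0 fb; apply/eqP; rewrite cards_eq0; apply/eqP/setP => e; rewrite [e \in _]inE [e \in set0]inE.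
apply/negP => /andP[_ /eqP E]; have [_ _ H] := C2_spec E f0; by rewrite fb in H.
Qed.

Lemma E2_x e x y : e \in E2 adj J -> x \notin J -> y \in J -> C2 e = [set x; y] -> x \in e.
Proof.
move=> He Hx Hy E; have [_ ne _] := C2_spec E (set2_neq0 _ _).
move: He; rewrite /E2 inE /EGJ inE => /andP[/andP[_ dis] _].
case/set0Pn: ne => z; rewrite inE => /andP[zf ze].
have zJ : z \notin J by rewrite (disjointFr dis ze).
by rewrite -(in_set2_notJ zJ Hy zf).
Qed.

Lemma K2_le1 x y : x \notin J -> y \in J -> K2 [set x; y] <= 1.
Proof.
move=> Hx Hy; apply/card_le1_eqP => e e'; rewrite [e \in _]inE [e' \in _]inE => /andP[He /eqP E] /andP[He' /eqP E'].
have xe := E2_x He Hx Hy E; have xe' := E2_x He' Hx Hy E'.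
move: He; rewrite /E2 inE => /andP[eG /andP[_ /forall_inP /(_ x xe) /cards1P[g Hg]]].
have : e \in [set g0 in EGJ adj J | x \in g0] by rewrite inE eG xe.
have : e' \in [set g0 in EGJ adj J | x \in g0].
  by move: He'; rewrite /E2 inE => /andP[eG' _]; rewrite inE eG' xe'.
by rewrite Hg !inE => /eqP -> /eqP ->.
Qed.

Lemma K3_notE3 f : f \notin E3 adj J -> K3 f = 0.
Proof.
move=> fE; apply/eqP; rewrite -leqn0 leqNgt -has_count; apply/hasPn => p.
rewrite mem_cat => Hp; apply/negP => Hf.
by case/orP: Hp => Hp; rewrite (BB_we_E3 Hp Hf) in fE.
Qed.

Lemma K3_E3 x y : x \notin J -> y \in J -> K3 [set x; y] = 2 * cnt x y.
Proof. by move=> Hx Hy; rewrite /K3 /C3 count_cat cnt_walk // addnn -mul2n. Qed.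

Lemma C4_notE3 f e : e \in E4 adj J -> f \in closed_walk_edges (C4 e) -> f \notin E3 adj J -> f = e.
Proof.
move=> He; case: (C4_spec He) => u [v [Huv E ->]]; rewrite cwe3.
have /subsetP Hs := ie_sub He.
have Hu := Hs u (ltac:(by rewrite E !inE eqxx)).
have Hv := Hs v (ltac:(by rewrite E !inE eqxx ?orbT)).
rewrite !N3P ?ie_out // in Hu Hv.
case/andP: Hu => Hu uJ; case/andP: Hv => Hv vJ.
case/or3P => /eqP -> fE //; exfalso; move/negP: fE; apply; apply/E3P.
  by exists (ie e), v; rewrite setUC ie_out.
by exists (ie e), u; rewrite ie_out.
Qed.

Lemma C4_E3 x y e : x \notin J -> y \in J -> e \in E4 adj J ->
  [set x; y] \in closed_walk_edges (C4 e) -> ie e = x /\ y \in e.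
Proof.
move=> Hx Hy He; case: (C4_spec He) => u [v [Huv E ->]]; rewrite cwe3.
have /subsetP HJ := E4_sub He.
have uJ : u \in J by apply: HJ; rewrite E !inE eqxx.
have vJ : v \in J by apply: HJ; rewrite E !inE eqxx ?orbT.
have ieJ := ie_out He.
case/or3P => /eqP Ef.
- have : x \in [set u; v] by rewrite -Ef !inE eqxx.
  by rewrite !inE => /orP[] /eqP ex; rewrite ex ?uJ ?vJ in Hx.
- have xi : x = ie e.
    have : x \in [set v; ie e] by rewrite -Ef !inE eqxx.
    by rewrite !inE => /orP[/eqP ex|/eqP //]; rewrite ex vJ in Hx.
  split => //; rewrite xi [RHS]setUC in Ef; rewrite (set2_inj Ef) E !inE eqxx ?orbT //.
- have xi : x = ie e.
    have : x \in [set ie e; u] by rewrite -Ef !inE eqxx.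
    by rewrite !inE => /orP[/eqP //|/eqP ex]; rewrite ex uJ in Hx.
  split => //; rewrite xi in Ef; rewrite (set2_inj Ef) E !inE eqxx ?orbT //.
Qed.

Lemma K4_notE3 f : f \notin E3 adj J -> K4 f <= (f \in E4 adj J).
Proof.
move=> fE; case fE4: (f \in E4 adj J).
  apply/card_le1_eqP => e e'; rewrite [e \in _]inE [e' \in _]inE => /andP[He Hf] /andP[He' Hf'].
  by rewrite -(C4_notE3 He Hf fE) -(C4_notE3 He' Hf' fE).
rewrite leqn0 cards_eq0; apply/eqP/setP => e; rewrite [e \in _]inE [e \in set0]inE.
apply/negP => /andP[He Hf]; by rewrite (C4_notE3 He Hf fE) He in fE4.
Qed.

Lemma K4_E3 x y : x \notin J -> y \in J ->
  K4 [set x; y] <= 1 /\ (0 < K4 [set x; y] -> exists2 e, e \in E4 adj J & ie e = x /\ y \in e).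
Proof.
move=> Hx Hy; split.
  apply/card_le1_eqP => e e'; rewrite [e \in _]inE [e' \in _]inE => /andP[He Hf] /andP[He' Hf'].
  case: (C4_E3 Hx Hy He Hf) => ie1 _; case: (C4_E3 Hx Hy He' Hf') => ie2 _.
  by apply: ie_inj => //; rewrite ie1 ie2.
rewrite card_gt0 => /set0Pn[e]; rewrite [e \in _]inE => /andP[He Hf].
by exists e => //; apply: C4_E3.
Qed.

Lemma card_gt1 (A : {set V}) j : j \in A -> A != [set j] -> 1 < #|A|.
Proof.
move=> jA; rewrite ltnNge; apply: contra => H.
by rewrite eq_sym eqEcard sub1set jA cards1 H.
Qed.

Lemma sum_card (A : {set V}) : #|A| = \sum_i ((i \in A) : nat).
Proof. by rewrite -sum1_card big_mkcond /=; apply: eq_bigr => i _; case: (i \in A). Qed.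

Lemma sum_eq1 (a : V) : \sum_i ((i == a) : nat) = 1.
Proof. by rewrite (bigD1 a) //= eqxx big1 // => i /negbTE ->. Qed.

Lemma np_gt1 i j : j \in J -> i \in N3 adj J j -> ~~ private_nb adj J j i ->
  [/\ i \notin J, j \in N3 adj J i & 1 < #|N3 adj J i|].
Proof.
move=> Hj iN np.
have iJ : i \notin J by apply/negP => iJ; have := N3_J Hj iJ; rewrite iN.
have jN : j \in N3 adj J i by rewrite -N3sym.
split => //; apply: (@card_gt1 (N3 adj J i) j jN); by move: np; rewrite /private_nb iJ.
Qed.

Lemma deg_le j : j \in J -> #|N3 adj J j| <= \sum_i cnt i j.
Proof.
move=> Hj; rewrite sum_card.
case: (boolP [exists p, private_nb adj J j p]) => [/existsP[p Hp]|Hn].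
  move: (Hp) => /andP[pJ /eqP Np].
  have jNp : j \in N3 adj J p by rewrite Np inE.
  have pNj : p \in N3 adj J j by rewrite N3sym.
  have f0E : [set p; j] \in E3 adj J by move: jNp; rewrite /N3 inE.
  have np : forall i, i != p -> ~~ private_nb adj J j i.
    move=> i ip; apply/negP => Hi; move/card_le1_eqP: (J3 Hj) => H.
    have e : p = i by apply: H; rewrite inE.
    by rewrite e eqxx in ip.
  have := J2 [set p; j]; rewrite /isolated f0E /= => /forall_inPn [z zf0 Hz].
  rewrite degF_E3 in Hz.
  have zj : z = j.
    move: zf0; rewrite !inE => /orP[/eqP zp|/eqP //].
    by rewrite zp Np cards1 eqxx in Hz.
  subst z.
  have : ~~ (N3 adj J j \subset [set p]).
    apply/negP => S; have := subset_leq_card S; rewrite cards1 => H1.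
    have : 0 < #|N3 adj J j| by rewrite card_gt0; apply/set0Pn; exists p.
    by move: Hz; case: #|_| H1 => [|[|]].
  case/subsetPn => i' i'N; rewrite inE => i'p.
  have [i'J jNi' g1'] := np_gt1 Hj i'N (np i' i'p).
  have c2 : 2 <= cnt i' j.
    apply: c_ge2 => //; apply/orP; right; apply/exists_inP; exists j => //.
    by apply/existsP; exists p.
  have H : forall i, ((i \in N3 adj J j) : nat) + (i == i') <= cnt i j + (i == p).
    move=> i; case: (eqVneq i p) => [->|ip].
      rewrite eq_sym (negbTE i'p) addn0 addn1; by case: (p \in _).
    case: (eqVneq i i') => [->|ii'].
      by rewrite i'N addn0.
    rewrite !addn0; case iN: (i \in N3 adj J j) => //.
    have [iJ jNi g1] := np_gt1 Hj iN (np i ip).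
    exact: c_ge1.
  have := @leq_sum _ (index_enum V) xpredT _ _ (fun i _ => H i).
  by rewrite !big_split /= !sum_eq1 leq_add2r.
apply: leq_sum => i _; case iN: (i \in N3 adj J j) => //.
have np : ~~ private_nb adj J j i by apply/negP => Hi; move/negP: Hn; apply; apply/existsP; exists i.
have [iJ jNi g1] := np_gt1 Hj iN np.
exact: c_ge1.
Qed.

Lemma cnt_pos i j : 0 < cnt i j -> 1 < #|N3 adj J i|.
Proof. by rewrite /cnt /base; case: ifP => // /norP[_]; rewrite -leqNgt. Qed.

Lemma E4_card e : e \in E4 adj J -> #|e| = 2.
Proof. by case/E4_edge/edge_cases => u [v [Huv ->]]; rewrite cards2 adj_neq. Qed.

Lemma KC_E3 x y : x \notin J -> y \in J -> K2 [set x; y] + K3 [set x; y] + K4 [set x; y] <= 5.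
Proof.
move=> Hx Hy.
rewrite K3_E3 //.
have c2 := c_le2 x y.
have k2 := K2_le1 Hx Hy.
have [k4 k4e] := K4_E3 Hx Hy.
case: (leqP (cnt x y) 1) => c1.
  by apply: leq_trans (leq_add (leq_add k2 (leq_mul (leqnn 2) c1)) k4) _.
have cx : cnt x y = 2 by apply/eqP; rewrite eqn_leq c2 c1.
case: (posnP (K4 [set x; y])) => [->|k4p].
  rewrite addn0 cx; by apply: leq_trans (leq_add k2 (leqnn 4)) _.
case: (k4e k4p) => e He [iex ye].
have g1 : 1 < #|N3 adj J x| by apply: (@cnt_pos x y); rewrite cx.
have g2 : 2 < #|N3 adj J x|.
  rewrite ltn_neqAle g1 andbT; apply/negP => /eqP c2'.
  have es : e \subset N3 adj J x by rewrite -iex; apply: ie_sub.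
  have eN : e = N3 adj J x by apply/eqP; rewrite eqEcard es -c2' E4_card.
  have nn : ~~ need x.
    apply/negP => /exists_inP[j' j'N /existsP[p' Hp']].
    have j'e : j' \in e by rewrite eN.
    by have := ie_nopriv He j'e p'; rewrite Hp'.
  have := @c_le1 x y (ltac:(by rewrite -c2')) nn; by rewrite cx.
have bf : bad [set x; y].
  apply/exists_inP; exists e => //; rewrite iex !inE eqxx /= g2 andbT.
  by apply/set0Pn; exists y; rewrite !inE eqxx ye orbT.
rewrite K2_bad ?set2_neq0 // cx; by apply: leq_trans (leq_add (leqnn _) k4) _.
Qed.

Lemma C3_cover : E3_covering adj J C3.
Proof.
split.
- move=> p; rewrite mem_cat => Hp.
  have {Hp} : p \in BB by case/orP: Hp.
  case/BB_mem => i [a [b [Hi Ha Hb ab ->]]].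
  rewrite N3P // in Ha; rewrite N3P // in Hb.
  case/andP: Ha => ia aJ; case/andP: Hb => ib bJ.
  have ai : a != i by apply: contraNneq Hi => <-.
  have bi : b != i by apply: contraNneq Hi => <-.
  rewrite /is_path /ends_in_J /= adj_sym ia ib ab aJ bJ /= !inE negb_or ai ab eq_sym bi.
  done.
- move=> j j' _ _ _; rewrite /C3 !count_cat !addnn !odd_double; done.
- move=> j Hj; rewrite /dC /C3 count_cat addnn -mul2n leq_mul2l /= degF_E3.
  apply: leq_trans (deg_le Hj) _; rewrite count_BB; done.
Qed.

Lemma main_sec : exists (C2 : {set V} -> {set V}) (C3 : seq (seq V)) (C4 : {set V} -> seq V),
    [/\ J_covering adj J C2 C3 C4,
        (forall f, f \in edges adj -> f \notin E1 adj J -> KC adj J C2 C3 C4 f <= 5)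
      & (forall f, f \in E1 adj J -> KC adj J C2 C3 C4 f = 0)].
Proof.
exists C2, C3, C4; split.
- split; [by move=> e He; apply: C2_cover | exact: C3_cover | by move=> e He; apply: C4_cover].
- move=> f fE _; change (K2 f + K3 f + K4 f <= 5).
  case: (boolP (f \in E3 adj J)) => [/E3P[x [y [Hx Hy _ ->]]]|fn]; first exact: KC_E3.
  rewrite K2_notE3 ?edge_neq0 // K3_notE3 //; apply: leq_trans (K4_notE3 fn) _.
  by case: (_ \in _).
- move=> f; rewrite /E1 inE /EGJ inE => /andP[/andP[fE dis] _].
  change (K2 f + K3 f + K4 f = 0).
  have fn : f \notin E3 adj J.
    apply/negP => /E3P[x [y [_ Hy _ ef]]].
    have yf : y \in f by rewrite ef !inE eqxx orbT.
    by rewrite (disjointFr dis yf) in Hy.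
  have fn4 : f \notin E4 adj J.
    apply/negP => /E4_sub /subsetP Hs.
    case/set0Pn: (edge_neq0 fE) => z zf.
    by have := Hs z zf; rewrite (disjointFr dis zf).
  rewrite K2_notE3 ?edge_neq0 // K3_notE3 //; apply/eqP; rewrite -leqn0.
  by apply: leq_trans (K4_notE3 fn) _; rewrite (negbTE fn4).
Qed.
End H.

Theorem lemma4p2 (V : finType) (adj : rel V)
  (adj_sym : symmetric adj) (adj_irr : irreflexive adj) (J : {set V}) :
  nice adj -> good adj J ->
  exists (C2 : {set V} -> {set V}) (C3 : seq (seq V)) (C4 : {set V} -> seq V),
    [/\ J_covering adj J C2 C3 C4,
        (forall f, f \in edges adj -> f \notin E1 adj J -> KC adj J C2 C3 C4 f <= 5)
      & (forall f, f \in E1 adj J -> KC adj J C2 C3 C4 f = 0)].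
Proof.
move=> _ [_ [_ HJ2 HJ3 [ie [Hie Hinj]] HJ5]].
apply: (@main_sec V adj adj_sym adj_irr J ie) => //.
- by move=> e /Hie[].
- by move=> e /Hie[].
- by move=> e /Hie[].
Qed.
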